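(* Assume $\mu$ is such that $\overline N=\sum_{N\ge0}N\lambda_{N,\mu}\in\mathbb{N}$. Then $$F(\overline N)\ge F_{\mathrm{gc}}(\mu)\ge F(\overline N)-\ln(1+\overline N)-1.$$
   Context: Fix a nondecreasing sequence $(E_j)_{j\ge0}$ of nonnegative reals. A configuration is a sequence $n=(n_0,n_1,\dots)$ of nonnegative integers with finitely many nonzero entries; $|n|=\sum_jn_j$ and $E(n)=\sum_jE_jn_j$. The canonical partition function is $Z(N)=\sum_{|n|=N}e^{-E(n)}$ and the canonical free energy is $F(N)=-\ln Z(N)$. The grand canonical partition function is $Z_{\mathrm{gc}}(\mu)=\sum_ne^{-(E(n)-\mu|n|)}$ (assumed finite, as are all $Z(N)$), $\lambda_{N,\mu}=Z(N)e^{\mu N}/Z_{\mathrm{gc}}(\mu)$, and the grand canonical free energy is $F_{\mathrm{gc}}(\mu)=\sum_{N\ge0}\lambda_{N,\mu}F(N)-S(\lambda)$ with $S(\lambda)=-\sum_{N\ge0}\lambda_{N,\mu}\ln\lambda_{N,\mu}$. *)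

(* Defs.v *)
From HB Require Import structures.
From mathcomp Require Import all_boot all_order all_algebra finmap.
From mathcomp Require Import all_classical all_reals all_analysis.

Set Implicit Arguments.
Unset Strict Implicit.
Unset Printing Implicit Defensive.

Import Order.TTheory GRing.Theory Num.Theory.
Import numFieldNormedType.Exports.
Local Open Scope classical_set_scope.
Local Open Scope ring_scope.

Definition cfg := {fsfun nat -> nat for fun => 0%N}.

Section Defs.
Variable R : realType.
Variable E : nat -> R.        (* the one-particle energies E_j *)

Definition cfg_size (n : cfg) : nat := (\sum_(j <- finsupp n) n j)%N.

Definition cfg_energy (n : cfg) : R := \sum_(j <- finsupp n) E j * (n j)%:R.

Definition Zcan_e (N : nat) : \bar R :=
  \esum_(n in [set n : cfg | cfg_size n = N]) (expR (- cfg_energy n))%:E.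

(* Z(N) as a real number (meaningful under the finiteness assumption) *)
Definition Zcan (N : nat) : R := fine (Zcan_e N).

Definition Fcan (N : nat) : R := - ln (Zcan N).

Definition Zgc_e (mu : R) : \bar R :=
  \esum_(n in [set: cfg]) (expR (- (cfg_energy n - mu * (cfg_size n)%:R)))%:E.

Definition Zgc (mu : R) : R := fine (Zgc_e mu).

Definition lam (mu : R) (N : nat) : R := Zcan N * expR (mu * N%:R) / Zgc mu.

Definition rsum (u : nat -> R) : R := limn (series u).

Definition entropy (mu : R) : R := - rsum (fun N => lam mu N * ln (lam mu N)).

Definition Fgc (mu : R) : R := rsum (fun N => lam mu N * Fcan N) - entropy mu.

End Defs.

(* Main.v *)
Require Import Defs.
From HB Require Import structures.
From mathcomp Require Import all_boot all_order all_algebra finmap.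
From mathcomp Require Import all_classical all_reals all_analysis.
From mathcomp Require Import ring lra zify.
Import Order.TTheory GRing.Theory Num.Theory.
Import numFieldNormedType.Exports.
Local Open Scope classical_set_scope.
Local Open Scope ring_scope.
Set Implicit Arguments.
Unset Strict Implicit.
Unset Printing Implicit Defensive.
Section Cfg.
Variable R : realType.
Variable E : nat -> R.

Definition vanish (K : nat) (n : cfg) := forall j, (K <= j)%N -> n j = 0%N.

Lemma big_finsupp (V : Type) (idx : V) (op : Monoid.com_law idx) (n : cfg) K
  (g : nat -> nat -> V) :
  vanish K n -> (forall j, g j 0%N = idx) ->
  \big[op/idx]_(j <- finsupp n) g j (n j) = \big[op/idx]_(j < K) g j (n j).
Proof.
move=> vn g0.
rewrite -(big_mkord (fun _ => true) (fun j => g j (n j))) /index_iota subn0.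
rewrite -(@big_rmcond_in _ _ _ _ (iota 0 K) (fun j => j \in finsupp n)) /=; last first.
  by move=> j _; rewrite mem_finsupp negbK => /eqP ->.
rewrite -[in RHS]big_filter; apply: perm_big.
apply: uniq_perm; [exact: fset_uniq | by rewrite filter_uniq ?iota_uniq |].
move=> j; rewrite mem_filter mem_iota /= add0n andbC.
case jn: (j \in finsupp n); rewrite ?andbF ?andbT //.
symmetry; rewrite ltnNge; apply/negP => /vn.
by move: jn; rewrite mem_finsupp => /eqP.
Qed.

Definition acfg (n : cfg) : R := expR (- cfg_energy E n).

Lemma energy_vanish K n : vanish K n ->
  cfg_energy E n = \sum_(j < K) E j * (n j)%:R.
Proof.
move=> vn; rewrite /cfg_energy (@big_finsupp _ _ _ n K (fun j k => E j * k%:R) vn) //.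
by move=> j; rewrite mulr0.
Qed.

Lemma size_vanish K n : vanish K n -> cfg_size n = (\sum_(j < K) n j)%N.
Proof. by move=> vn; rewrite /cfg_size (@big_finsupp _ _ _ n K (fun j k => k) vn). Qed.

Definition upd (n : cfg) (K k : nat) : cfg := [fsfun n with K |-> k].
Definition c0 : cfg := [fsfun].

Lemma c0E j : c0 j = 0%N.
Proof. by rewrite /c0 fsfunE. Qed.

Lemma updE n K k j : upd n K k j = if j == K then k else n j.
Proof. by rewrite /upd fsfun_withE. Qed.

Fixpoint L (K N : nat) : seq cfg :=
  match K with
  | 0 => if N == 0%N then [:: c0] else [::]
  | K'.+1 => [seq upd n K' k | k <- iota 0 N.+1, n <- L K' (N - k)]
  end.

Lemma L0 N : L 0 N = if N == 0%N then [:: c0] else [::].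
Proof. by []. Qed.
Lemma LS K N : L K.+1 N = [seq upd n K k | k <- iota 0 N.+1, n <- L K (N - k)].
Proof. by []. Qed.

Lemma L_spec K N n : n \in L K N -> vanish K n /\ (\sum_(j < K) n j)%N = N.
Proof.
elim: K N n => [|K IH] N n; rewrite ?L0 ?LS.
  case: eqP => // -> ; rewrite inE => /eqP ->; split; last by rewrite big_ord0.
  by move=> j _; rewrite c0E.
case/allpairsPdep => k [n' [kin n'in ->]].
have [vn' sn'] := IH _ _ n'in.
have kN : (k <= N)%N by move: kin; rewrite mem_iota add0n ltnS.
split.
  move=> j Kj; rewrite updE; case: eqP => [jK|_]; last by apply: vn'; apply: ltnW.
  by move: Kj; rewrite jK ltnn.
rewrite big_ord_recr /= updE eqxx.
rewrite (eq_bigr (fun j : 'I_K => n' j)); last first.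
  by move=> j _; rewrite updE (ltn_eqF (ltn_ord j)).
by rewrite sn' subnK.
Qed.

Lemma L_complete K N n : vanish K n -> (\sum_(j < K) n j)%N = N -> n \in L K N.
Proof.
elim: K N n => [|K IH] N n; rewrite ?L0 ?LS.
  move=> vn; rewrite big_ord0 => <-; rewrite eqxx inE; apply/eqP/fsfunP => j.
  by rewrite c0E vn.
move=> vn sn0; have sn : (\sum_(j < K) n j + n K)%N = N by rewrite -sn0 big_ord_recr.
set k := n K.
have -> : n = upd (upd n K 0) K k.
  by apply/fsfunP => j; rewrite !updE; case: eqP => // ->.
apply: (@allpairs_f_dep _ _ _ (fun k n => upd n K k)).
  by rewrite mem_iota add0n ltnS -sn leq_addl.
apply: IH.
  move=> j Kj; rewrite updE; case: eqP => // jK; apply: vn.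
  by rewrite ltn_neqAle Kj andbT eq_sym; apply/eqP.
rewrite -sn addnK; apply: eq_bigr => j _.
by rewrite updE (ltn_eqF (ltn_ord j)).
Qed.

Lemma L_uniq K N : uniq (L K N).
Proof.
elim: K N => [|K IH] N; rewrite ?L0 ?LS; first by case: eqP.
apply: allpairs_uniq_dep; [exact: iota_uniq | by move=> *; apply: IH |].
move=> p1 p2 /allpairsPdep [k1 [n1 [k1in n1in ->]]].
move=> /allpairsPdep [k2 [n2 [k2in n2in ->]]] /= eq.
have ek : k1 = k2 by move: (congr1 (fun f : cfg => f K) eq); rewrite !updE eqxx.
subst k2; congr Tagged; apply/fsfunP => j.
have [v1 _] := L_spec n1in; have [v2 _] := L_spec n2in.
move: (congr1 (fun f : cfg => f j) eq); rewrite !updE.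
case: eqP => [->|] //; by rewrite v1 ?v2.
Qed.

Definition W K N : R := \sum_(n <- L K N) acfg n.

Lemma acfg_upd K n k : vanish K n ->
  acfg (upd n K k) = expR (- (E K * k%:R)) * acfg n.
Proof.
move=> vn.
have vn' : vanish K.+1 (upd n K k).
  move=> j Kj; rewrite updE (gtn_eqF Kj); apply: vn; exact: ltnW.
rewrite /acfg (energy_vanish vn') (energy_vanish vn) big_ord_recr /= updE eqxx.
rewrite -expRD; congr expR.
rewrite opprD addrC; congr (- _ - _); apply: eq_bigr => j _.
by rewrite updE (ltn_eqF (ltn_ord j)).
Qed.

Lemma W_rec K N :
  W K.+1 N = \sum_(k < N.+1) expR (- (E K * k%:R)) * W K (N - k).
Proof.
rewrite /W LS big_allpairs_dep -(big_mkord (fun _ => true) (fun k => expR (- (E K * k%:R)) * W K (N - k))).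
rewrite /index_iota subn0; apply: eq_bigr => k _.
rewrite /W mulr_sumr big_seq_cond [RHS]big_seq_cond; apply: eq_bigr => n /andP [nin _].
by rewrite acfg_upd //; have [] := L_spec nin.
Qed.

Lemma W0 N : W 0 N = if N == 0%N then 1 else 0.
Proof.
rewrite /W L0; case: eqP => _; rewrite ?big_nil // big_seq1 /acfg.
by rewrite (energy_vanish (K := 0)) ?big_ord0 ?oppr0 ?expR0 // => j _; rewrite c0E.
Qed.

Lemma W_ge0 K N : 0 <= W K N.
Proof. by apply: sumr_ge0 => n _; exact: expR_ge0. Qed.



Lemma lc_step (f h : nat -> R) x : 0 <= x -> (forall n, 0 < f n) ->
  (forall n, f n * f n.+2 <= f n.+1 ^+ 2) -> h 0%N = f 0%N ->
  (forall n, h n.+1 = f n.+1 + x * h n) ->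
  (forall n, 0 < h n) /\ forall n, h n * h n.+2 <= h n.+1 ^+ 2.
Proof.
move=> x0 fp flc h0 hS.
have hp : forall n, 0 < h n.
  elim=> [|n IH]; first by rewrite h0.
  rewrite hS; have := fp n.+1; move=> *; nra.
have Q : forall n, h n * f n.+2 <= h n.+1 * f n.+1.
  elim=> [|n IH].
    rewrite hS h0 mulrDl.
    have := flc 0%N; rewrite expr2 => H1.
    have H2 : 0 <= x * f 0%N * f 1%N.
      by apply: mulr_ge0; [apply: mulr_ge0 => //|]; apply: ltW.
    lra.
  have key : h n * f n.+3 <= h n.+1 * f n.+2.
    have H1 : h n * f n.+2 * f n.+3 <= h n.+1 * f n.+1 * f n.+3.
      by apply: ler_wpM2r => //; apply: ltW.
    have H2 : h n.+1 * (f n.+1 * f n.+3) <= h n.+1 * (f n.+2 * f n.+2).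
      by apply: ler_wpM2l; [apply: ltW | rewrite -expr2].
    rewrite -(ler_pM2r (fp n.+2)).
    apply: (le_trans _ (_ : h n.+1 * f n.+1 * f n.+3 <= _)).
      by rewrite mulrAC.
    by rewrite -!mulrA.
  rewrite [h n.+2]hS [h n.+1 in X in X <= _]hS !mulrDl.
  have := flc n.+1; rewrite expr2 => H1.
  have H2 : x * h n * f n.+3 <= x * h n.+1 * f n.+2.
    by rewrite -!mulrA; apply: ler_wpM2l.
  lra.
split=> // n.
rewrite [h n.+2]hS expr2 mulrDr.
have := Q n => H1.
have H2 : h n * (x * h n.+1) = x * h n * h n.+1 by rewrite mulrA (mulrC (h n)).
rewrite [h n.+1 in X in _ <= X * _]hS mulrDl H2 mulrC.
lra.
Qed.

Lemma W_S K N : W K.+1 N.+1 = W K N.+1 + expR (- E K) * W K.+1 N.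
Proof.
rewrite !W_rec big_ord_recl /= mulr0 oppr0 expR0 mul1r subn0; congr (_ + _).
rewrite mulr_sumr; apply: eq_bigr => k _.
rewrite /bump /= add1n subSS mulrA -expRD; congr (expR _ * _).
by rewrite -addn1 natrD; ring.
Qed.

Lemma W_S0 K : W K.+1 0 = W K 0.
Proof. by rewrite W_rec big_ord1 /= mulr0 oppr0 expR0 mul1r. Qed.

Lemma W1 N : W 1 N = expR (- E 0%N) ^+ N.
Proof.
elim: N => [|N IH]; first by rewrite W_S0 W0.
by rewrite W_S W0 IH add0r exprS.
Qed.

Lemma W_lc K : (0 < K)%N ->
  (forall N, 0 < W K N) /\ forall N, W K N * W K N.+2 <= W K N.+1 ^+ 2.
Proof.
case: K => // K _; elim: K => [|K [IHp IHlc]].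
  split=> N; rewrite !W1; first by apply: exprn_gt0; exact: expR_gt0.
  rewrite -exprD -exprM (_ : (N + N.+2 = N.+1 * 2)%N) //; lia.
apply: (lc_step (x := expR (- E K.+1))) => //.
- by rewrite W_S0.
- by move=> n; rewrite W_S.
Qed.
Lemma Zcan_fin N : (Zcan_e E N < +oo)%E -> Zcan_e E N = (Zcan E N)%:E.
Proof.
move=> h; rewrite /Zcan fineK // ge0_fin_numE // /Zcan_e.
by apply: esum_ge0 => n _; rewrite lee_fin; exact: expR_ge0.
Qed.

Lemma Zcan_ge N s : (Zcan_e E N < +oo)%E -> uniq s ->
  (forall n, n \in s -> cfg_size n = N) -> \sum_(n <- s) acfg n <= Zcan E N.
Proof.
move=> hf us hs; rewrite -lee_fin -Zcan_fin // -sumEFin fsbig_seq //.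
apply: esum_ge; exists [set` s] => //; split; first exact: finite_seq.
by move=> n /= ns; apply: hs.
Qed.

Lemma Zcan_le N B : (Zcan_e E N < +oo)%E ->
  (forall s, uniq s -> (forall n, n \in s -> cfg_size n = N) ->
     \sum_(n <- s) acfg n <= B) -> Zcan E N <= B.
Proof.
move=> hf H; rewrite -lee_fin -Zcan_fin // /Zcan_e /esum.
apply: ge_ereal_sup => _ [X [finX XS] <-].
rewrite fsbig_finite // sumEFin lee_fin; apply: H; first exact: fset_uniq.
by move=> n; rewrite in_fset_set // => /set_mem /XS.
Qed.

Lemma sub_sum (s t : seq cfg) (F : cfg -> R) : uniq s -> uniq t ->
  {subset s <= t} -> (forall n, 0 <= F n) ->
  \sum_(n <- s) F n <= \sum_(n <- t) F n.
Proof.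
move=> us ut st F0.
rewrite [X in _ <= X](bigID (fun n => n \in s)) /=.
apply: (le_trans (y := \sum_(n <- t | n \in s) F n)); last first.
  by rewrite lerDl; apply: sumr_ge0.
rewrite -[X in _ <= X]big_filter.
have -> // : \sum_(n <- [seq n <- t | n \in s]) F n = \sum_(n <- s) F n.
apply: perm_big; apply: uniq_perm => //; first by rewrite filter_uniq.
by move=> n; rewrite mem_filter; case ns: (n \in s) => //=; rewrite st.
Qed.

Lemma vanish_mono K K' n : (K <= K')%N -> vanish K n -> vanish K' n.
Proof. by move=> KK' vn j Kj; apply: vn; exact: leq_trans Kj. Qed.

Lemma exists_K (s : seq cfg) K0 :
  exists K, (K0 <= K)%N /\ forall n, n \in s -> vanish K n.
Proof.
elim: s => [|n s [K [K0K IH]]]; first by exists K0.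
pose b := (\max_(j <- finsupp n) j).+1.
exists (maxn K b); split; first by rewrite (leq_trans K0K) // leq_maxl.
move=> m; rewrite inE => /orP [/eqP ->|ms]; last first.
  by apply: (vanish_mono (leq_maxl K b)); apply: IH.
apply: (vanish_mono (leq_maxr K b)) => j bj.
apply/eqP; apply: contraTT bj => nj; rewrite -ltnNge ltnS.
by apply: (leq_bigmax_seq (F := id)) => //; rewrite mem_finsupp.
Qed.

Lemma sum_le_W N K s : uniq s -> (forall n, n \in s -> cfg_size n = N) ->
  (forall n, n \in s -> vanish K n) -> \sum_(n <- s) acfg n <= W K N.
Proof.
move=> us hs hv; apply: sub_sum => //; first exact: L_uniq.
- move=> n ns; apply: L_complete; first exact: hv.
  by rewrite -(size_vanish (hv _ ns)); apply: hs.
- by move=> n; exact: expR_ge0.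
Qed.

Lemma W_le_Z K N : (Zcan_e E N < +oo)%E -> W K N <= Zcan E N.
Proof.
move=> hf; apply: Zcan_ge => //; first exact: L_uniq.
by move=> n /L_spec [vn sn]; rewrite (size_vanish vn).
Qed.

Lemma Z_gt0 N : (Zcan_e E N < +oo)%E -> 0 < Zcan E N.
Proof.
move=> hf; apply: (lt_le_trans _ (W_le_Z 1 hf)).
by have [] := W_lc (K := 1) isT.
Qed.

Lemma Z_lc N : (forall N, (Zcan_e E N < +oo)%E) ->
  Zcan E N * Zcan E N.+2 <= Zcan E N.+1 ^+ 2.
Proof.
move=> hf.
have Zp := Z_gt0 (hf N).
have step : forall s t, uniq s -> uniq t ->
    (forall n, n \in s -> cfg_size n = N) ->
    (forall n, n \in t -> cfg_size n = N.+2) ->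
    (\sum_(n <- s) acfg n) * (\sum_(n <- t) acfg n) <= Zcan E N.+1 ^+ 2.
  move=> s t us ut hs ht.
  have [K [K1 hK]] := exists_K (s ++ t) 1.
  have [Wp Wlc] := W_lc K1.
  apply: (le_trans (y := W K N * W K N.+2)).
    apply: ler_pM; try (by apply: sumr_ge0 => n _; exact: expR_ge0).
      by apply: sum_le_W => // n ns; apply: hK; rewrite mem_cat ns.
    by apply: sum_le_W => // n ns; apply: hK; rewrite mem_cat ns orbT.
  apply: (le_trans (Wlc N)); rewrite !expr2.
  by apply: ler_pM; try exact: W_ge0; exact: W_le_Z.
rewrite mulrC -ler_pdivlMr //; apply: Zcan_le => // t ut ht.
rewrite ler_pdivlMr // mulrC.
have [t0|tp] := eqVneq (\sum_(n <- t) acfg n) 0.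
  by rewrite t0 mulr0 expr2; apply: mulr_ge0; apply: ltW; exact: Z_gt0.
have tpos : 0 < \sum_(n <- t) acfg n.
  by rewrite lt_def tp /=; apply: sumr_ge0 => n _; exact: expR_ge0.
rewrite -ler_pdivlMr //; apply: Zcan_le => // s us hs.
by rewrite ler_pdivlMr // step.
Qed.
Lemma esumZl (T : choiceType) (S : set T) (a : T -> \bar R) (r : R) :
  0 <= r -> (forall x, (0 <= a x)%E) ->
  \esum_(i in S) (r%:E * a i)%E = (r%:E * \esum_(i in S) a i)%E.
Proof.
move=> r0 a0; rewrite /esum -ereal_supZl //; last first.
  by apply/set0P; exists 0%E; exists set0; [exact: fsets_set0 | rewrite fsbig_set0].
congr ereal_sup; apply/seteqP; split => x /=.
  by move=> [A SA <-]; exists (\sum_(i \in A) a i)%E; [exists A|rewrite ge0_mule_fsumr].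
by move=> [y [A SA <-] <-]; exists A => //; rewrite ge0_mule_fsumr.
Qed.

Lemma Zgc_eseries mu : (forall N, (Zcan_e E N < +oo)%E) ->
  Zgc_e E mu = (\sum_(N <oo) (Zcan E N * expR (mu * N%:R))%:E)%E.
Proof.
move=> hf; rewrite /Zgc_e.
have -> : [set: cfg] = \bigcup_N [set n | cfg_size n = N].
  by apply/seteqP; split => n //= _; exists (cfg_size n).
rewrite nneseries_sum_bigcup; last first.
- by move=> n; rewrite lee_fin; exact: expR_ge0.
- by move=> i j _ _ [n [/= <- <-]].
apply: eq_eseriesr => N _.
transitivity (\esum_(n in [set n | cfg_size n = N])
    ((expR (mu * N%:R))%:E * (expR (- cfg_energy E n))%:E))%E.
  apply: eq_esum => n /= <-; rewrite -EFinM -expRD; congr (expR _)%:E.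
  by rewrite opprB addrC.
rewrite esumZl; last by move=> n; rewrite lee_fin; exact: expR_ge0.
  by rewrite -/(Zcan_e E N) Zcan_fin // -EFinM mulrC.
exact: expR_ge0.
Qed.

Lemma Zgc_cvg mu : (forall N, (Zcan_e E N < +oo)%E) -> (Zgc_e E mu < +oo)%E ->
  series (fun N => Zcan E N * expR (mu * N%:R)) @ \oo --> Zgc E mu.
Proof.
move=> hf hg.
have u0 : forall N, 0 <= Zcan E N * expR (mu * N%:R).
  by move=> N; apply: mulr_ge0; [apply: ltW; exact: Z_gt0 | exact: expR_ge0].
have c := is_cvg_nneseries (P := xpredT) (N := 0%N)
   (u_ := fun N => (Zcan E N * expR (mu * N%:R))%:E) (fun n _ _ => u0 n).
have fing : Zgc_e E mu \is a fin_num.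
  rewrite ge0_fin_numE // Zgc_eseries //; apply: nneseries_ge0 => n _ _.
  by rewrite lee_fin.
rewrite /Zgc -(Zgc_eseries mu hf) in c.
have c' : (fun n => (series (fun N => Zcan E N * expR (mu * N%:R)) n)%:E) @ \oo --> (fine (Zgc_e E mu))%:E.
  rewrite fineK //.
  apply: cvg_trans c; apply: near_eq_cvg; apply: nearW => n.
  by rewrite /series /= sumEFin.
by move/fine_cvgP: c' => [_]; apply: cvg_trans; apply: near_eq_cvg; apply: nearW.
Qed.
End Cfg.
Section Real.
Variable R : realType.
Implicit Types (p v : nat -> R).

Lemma limE (u : nat -> R) l : u @ \oo --> l -> limn u = l.
Proof. by move=> c; apply: cvg_lim => //; exact: Rhausdorff. Qed.

Lemma series_nd v : (forall n, 0 <= v n) ->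
  {homo series v : n m / (n <= m)%N >-> n <= m}.
Proof. by move=> v0; apply/nondecreasing_seqP => n; rewrite seriesSr lerDl. Qed.

Lemma series_le_lim v l : (forall n, 0 <= v n) -> series v @ \oo --> l ->
  forall n, series v n <= l.
Proof.
move=> v0 c n; rewrite -(limE c); apply: nondecreasing_cvgn_le.
  exact: series_nd.
exact: cvgP c.
Qed.

Lemma cvg_lin (P M : nat -> R) l1 l2 x y z :
  P @ \oo --> l1 -> M @ \oo --> l2 ->
  (fun n => x * P n + y * M n + z) @ \oo --> x * l1 + y * l2 + z.
Proof.
move=> cP cM.
apply: (@cvgD _ _ _ _ _ (fun n => x * P n + y * M n) (fun=> z)); last exact: cvg_cst.
apply: (@cvgD _ _ _ _ _ (fun n => x * P n) (fun n => y * M n)).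
  by apply: (@cvgM _ _ _ _ (fun=> x) P); [exact: cvg_cst|].
by apply: (@cvgM _ _ _ _ (fun=> y) M); [exact: cvg_cst|].
Qed.

Lemma ln_le_sub1 (x : R) : 0 < x -> ln x <= x - 1.
Proof.
move=> x0; have := expR_ge1Dx (ln x); rewrite lnK ?posrE //.
by move=> h; rewrite lerBrDl.
Qed.

Lemma gibbs_term (x q : R) : 0 < x -> 0 < q ->
  - x * ln x <= - x * ln q + q - x.
Proof.
move=> x0 q0.
have h := ln_le_sub1 (divr_gt0 q0 x0).
rewrite ln_div ?posrE // in h.
have H : x * (ln q - ln x) <= x * (q / x - 1) by rewrite ler_pM2l.
have h2 : x * (q / x) = q by rewrite mulrCA mulfV ?mulr1 // gt_eqF.
rewrite !mulrBr mulr1 h2 in H; lra.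
Qed.

Lemma geom_sum (a : R) n : series (fun N => (1 - a) * a ^+ N) n = 1 - a ^+ n.
Proof.
elim: n => [|n IH]; first by rewrite /series /= big_geq // expr0 subrr.
by rewrite seriesSr IH exprS; ring.
Qed.

Lemma ln_geom (a : R) N : 0 < a < 1 ->
  ln ((1 - a) * a ^+ N) = ln (1 - a) + N%:R * ln a.
Proof.
move=> /andP [a0 a1].
by rewrite lnM ?posrE ?subr_gt0 ?exprn_gt0 // lnXn // mulr_natl.
Qed.

Section Main.
Variables (p : nat -> R) (m : nat).
Hypothesis p0 : forall N, 0 < p N.
Hypothesis plc : forall N, p N * p N.+2 <= p N.+1 ^+ 2.
Hypothesis cP : series p @ \oo --> (1 : R).
Hypothesis cM : series (fun N => N%:R * p N) @ \oo --> (m%:R : R).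

Let c N := - p N * ln (p N).
Let G N := - ln (p N).
Let D N := G N.+1 - G N.

Lemma c_upper a n : 0 < a < 1 ->
  series c n <= (- ln (1 - a) - 1) * series p n
     + (- ln a) * series (fun N => N%:R * p N) n + 1.
Proof.
move=> a01; have /andP [a0 a1] := a01.
have qp N : 0 < (1 - a) * a ^+ N by rewrite mulr_gt0 ?subr_gt0 ?exprn_gt0.
apply: (le_trans (y := (- ln (1 - a) - 1) * series p n
     + (- ln a) * series (fun N => N%:R * p N) n
     + series (fun N => (1 - a) * a ^+ N) n)); last first.
  by rewrite lerD2l geom_sum lerBlDr lerDl; apply: exprn_ge0; apply: ltW.
rewrite /series /= !mulr_sumr -!big_split /=; apply: ler_sum => N _.
apply: (le_trans (gibbs_term (p0 N) (qp N))).
rewrite ln_geom //; lra.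
Qed.

Lemma c_ge0 N : 0 <= c N.
Proof.
have pl1 : p N <= 1.
  apply: (le_trans _ (series_le_lim (fun n => ltW (p0 n)) cP N.+1)).
  by rewrite seriesSr lerDr; apply: sumr_ge0 => k _; apply: ltW.
rewrite /c mulNr -mulrN; apply: mulr_ge0; first exact: ltW.
by rewrite oppr_ge0; apply: ln_le0.
Qed.

Lemma c_cvg : cvgn (series c).
Proof.
apply: nondecreasing_is_cvgn; first exact: series_nd c_ge0.
have a0 : (0 : R) < 1 / 2 by lra.
have a1 : (1 / 2 : R) < 1 by lra.
have a01 : (0 : R) < 1 / 2 < (1 : R) by rewrite a0 a1.
set a : R := 1 / 2 in a0 a1 a01 *.
have la : 0 <= - ln a by rewrite oppr_ge0 ln_le0 // ltW.
have l1a : 0 <= - ln (1 - a) by rewrite oppr_ge0 ln_le0 // lerBlDr lerDl ltW.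
exists (- ln (1 - a) * 1 + (- ln a) * m%:R + 1) => _ [n _ <-].
apply: (le_trans (c_upper n a01)).
have P0 : 0 <= series p n by apply: sumr_ge0 => k _; apply: ltW.
have P1 := series_le_lim (fun n => ltW (p0 n)) cP n.
have M1 := series_le_lim (fun n => mulr_ge0 (ler0n _ n) (ltW (p0 n))) cM n.
have : - ln a * series (fun N => N%:R * p N) n <= - ln a * m%:R by apply: ler_wpM2l.
have : - ln (1 - a) * series p n <= - ln (1 - a) * 1 by apply: ler_wpM2l.
move=> *; lra.
Qed.

Lemma G_convex N : D N <= D N.+1.
Proof.
rewrite /D /G.
have h := plc N.
have : ln (p N * p N.+2) <= ln (p N.+1 ^+ 2).
  by rewrite ler_ln ?posrE ?mulr_gt0 ?exprn_gt0.
rewrite lnM ?posrE // lnXn // mulr2n; lra.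
Qed.

Lemma D_mono k l : (k <= l)%N -> D k <= D l.
Proof.
move=> kl; rewrite -(subnK kl); elim: (l - k)%N => [|i IH] //.
by rewrite addSn; apply: (le_trans IH); apply: G_convex.
Qed.

Lemma G_support N : G m + (N%:R - m%:R) * D m <= G N.
Proof.
have [mN|Nm] := leqP m N.
  rewrite -(subnK mN); elim: (N - m)%N => [|i IH]; first by rewrite add0n subrr mul0r addr0.
  rewrite addSn.
  have eG : G (i + m).+1 = G (i + m) + D (i + m) by rewrite /D; ring.
  have hD := D_mono (leq_addl i m).
  have eN : (((i + m).+1)%:R : R) = (i + m)%:R + 1 by rewrite -addn1 natrD.
  rewrite eG eN.
  have -> : ((i + m)%:R + 1 - m%:R) * D m = ((i + m)%:R - m%:R) * D m + D m by ring.
  lra.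
have aux : forall i, (i <= m)%N -> G m + ((m - i)%N%:R - m%:R) * D m <= G (m - i)%N.
  elim=> [|i IH] im; first by rewrite subn0 subrr mul0r addr0.
  have IH' := IH (ltnW im).
  set k := (m - i.+1)%N.
  have e : (m - i)%N = k.+1 by rewrite /k subnSK.
  rewrite e in IH'.
  have hD : D k <= D m by apply: D_mono; exact: leq_subr.
  have eG : G k = G k.+1 - D k by rewrite /D; ring.
  have eN : ((k.+1)%:R : R) = k%:R + 1 by rewrite -addn1 natrD.
  rewrite eN in IH'; rewrite eG.
  have e2 : (k%:R + 1 - m%:R) * D m = (k%:R - m%:R) * D m + D m by ring.
  rewrite e2 in IH'.
  lra.
have := aux (m - N)%N (leq_subr N m); rewrite subKn //; exact: ltnW.
Qed.

Lemma c_lower n : G m * series p n + D m * (series (fun N => N%:R * p N) n - m%:R * series p n)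
   <= series c n.
Proof.
have -> : G m * series p n + D m * (series (fun N => N%:R * p N) n - m%:R * series p n)
   = series (fun k => p k * (G m + (k%:R - m%:R) * D m)) n.
  elim: n => [|n IH]; first by rewrite /series /= !big_geq //; ring.
  by rewrite !seriesSr -IH; ring.
rewrite /series /=; apply: ler_sum => N _.
have h := G_support N.
have : p N * (G m + (N%:R - m%:R) * D m) <= p N * G N by rewrite ler_pM2l.
rewrite /c /G; move=> *; lra.
Qed.

Lemma main_bounds :
  G m <= limn (series c) /\
  forall a, 0 < a < 1 -> limn (series c) <= - ln (1 - a) - m%:R * ln a.
Proof.
split.
  have L := cvg_lin (x := G m - D m * m%:R) (y := D m) (z := 0) cP cM.
  rewrite -[G m](_ : (G m - D m * m%:R) * 1 + D m * m%:R + 0 = G m); last by ring.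
  rewrite -(limE L); apply: ler_lim; [exact: cvgP L | exact: c_cvg |].
  apply: nearW => n; apply: (le_trans _ (c_lower n)).
  by rewrite le_eqVlt; apply/orP; left; apply/eqP; ring.
move=> a a01.
have L := cvg_lin (x := - ln (1 - a) - 1) (y := - ln a) (z := 1) cP cM.
rewrite -[X in _ <= X](_ : (- ln (1 - a) - 1) * 1 + - ln a * m%:R + 1 = - ln (1 - a) - m%:R * ln a); last by ring.
rewrite -(limE L); apply: ler_lim; [exact: c_cvg | exact: cvgP L |].
by apply: nearW => n; apply: c_upper.
Qed.

Lemma p_le1 N : p N <= 1.
Proof.
apply: (le_trans _ (series_le_lim (fun n => ltW (p0 n)) cP N.+1)).
by rewrite seriesSr lerDr; apply: sumr_ge0 => k _; apply: ltW.
Qed.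

Lemma final_bound : - ln (p m) <= ln (1 + m%:R) + 1.
Proof.
have [_ hb] := main_bounds.
have hG : - ln (p m) <= limn (series c) by have [] := main_bounds.
have [m00|m0] := eqVneq m 0%N.
  rewrite m00 in hb hG *.
  have a01 : (0 : R) < 1 / 2 < (1 : R) by apply/andP; split; lra.
  apply: (le_trans hG); apply: (le_trans (hb _ a01)).
  rewrite mul0r subr0 addr0 ln1 add0r.
  have e : (1 - 1 / 2 : R) = (2 : R)^-1 by lra.
  rewrite e lnV ?posrE // opprK.
  have h2 : (0 : R) < 2 by lra.
  have := ln_le_sub1 h2; lra.
have mp : (0 : R) < m%:R by rewrite ltr0n lt0n.
set a : R := m%:R / (m%:R + 1).
have a0 : 0 < a by rewrite /a divr_gt0 // addr_gt0.
have a1 : a < 1 by rewrite /a ltr_pdivrMr ?addr_gt0 // mul1r ltrDl.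
have a01 : 0 < a < (1 : R) by rewrite a0 a1.
apply: (le_trans hG); apply: (le_trans (hb _ a01)).
have e1 : 1 - a = (m%:R + 1)^-1.
  by rewrite /a; field; rewrite !gt_eqF // addr_gt0.
rewrite e1 lnV ?posrE ?addr_gt0 // opprK (addrC 1 m%:R).
have e2 : - (m%:R * ln a) = m%:R * ln (a^-1) by rewrite lnV ?posrE // mulrN.
have ai : 0 < a^-1 by rewrite invr_gt0.
have h := ln_le_sub1 ai.
have e3 : a^-1 - 1 = (m%:R)^-1.
  by rewrite /a; field; rewrite !gt_eqF // addr_gt0.
rewrite e3 in h.
have : m%:R * ln a^-1 <= m%:R * (m%:R)^-1 by rewrite ler_pM2l.
rewrite mulfV ?gt_eqF // => h2.
lra.
Qed.

Lemma summary : cvgn (series c) /\ 0 <= - ln (p m) /\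
  - ln (p m) <= ln (1 + m%:R) + 1.
Proof.
split; first exact: c_cvg.
split; last exact: final_bound.
by rewrite oppr_ge0; apply: ln_le0; apply: p_le1.
Qed.

End Main.
End Real.

Theorem corollaryA2 (R : realType) (E : nat -> R) (mu : R) (Nbar : nat) :
  (forall j, 0 <= E j) ->
  {homo E : i j / (i <= j)%N >-> i <= j} ->
  (forall N, (Zcan_e E N < +oo)%E) ->
  (Zgc_e E mu < +oo)%E ->
  (* Nbar = sum_N N lambda_{N,mu}, the series converging to the natural number Nbar *)
  series (fun N => N%:R * lam E mu N) @ \oo --> (Nbar%:R : R) ->
  Fgc E mu <= Fcan E Nbar /\
  Fcan E Nbar - ln (1 + Nbar%:R) - 1 <= Fgc E mu.
Proof.
move=> E0 Emon hf hg cM.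
set Zg := Zgc E mu.
pose u N := Zcan E N * expR (mu * N%:R).
have cu : series u @ \oo --> Zg := Zgc_cvg hf hg.
have u0 N : 0 < u N by apply: mulr_gt0; [exact: Z_gt0 | exact: expR_gt0].
have Zgp : 0 < Zg.
  apply: (lt_le_trans (u0 0%N)); apply: (le_trans _ (series_le_lim (fun n => ltW (u0 n)) cu 1)).
  by rewrite seriesSr /series /= big_geq // add0r.
have lamE N : lam E mu N = u N * Zg^-1 by [].
have p0 N : 0 < lam E mu N by rewrite lamE mulr_gt0 // invr_gt0.
have plc N : lam E mu N * lam E mu N.+2 <= lam E mu N.+1 ^+ 2.
  rewrite !lamE mulrACA -expr2 exprMn ler_pM2r ?exprn_gt0 ?invr_gt0 //.
  have eE : expR (mu * N%:R) * expR (mu * N.+2%:R) = expR (mu * N.+1%:R) ^+ 2.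
    rewrite -expRD expr2 -expRD; congr expR.
    by rewrite -[N.+2]addn2 -[N.+1]addn1 !natrD; ring.
  rewrite /u mulrACA eE exprMn ler_pM2r ?exprn_gt0 ?expR_gt0 //.
  exact: Z_lc.
have cP : series (lam E mu) @ \oo --> (1 : R).
  have -> : series (lam E mu) = fun n => series u n * Zg^-1.
    by apply/funext => n; rewrite /series /= mulr_suml.
  have Zg0 : Zg != 0 by rewrite gt_eqF.
  rewrite -(mulfV Zg0).
  exact: (@cvgM _ _ _ _ (series u) (fun=> Zg^-1) _ _ cu (cvg_cst _)).
have [cc [G0 Gb]] := summary p0 plc cP cM.
set c := fun N => - lam E mu N * ln (lam E mu N).
set C := limn (series c).
have lnlam N : ln (lam E mu N) = ln (Zcan E N) + mu * N%:R - ln Zg.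
  rewrite lamE /u lnM ?posrE ?invr_gt0 ?mulr_gt0 ?expR_gt0 //; last exact: Z_gt0.
  rewrite lnV ?posrE // lnM ?posrE ?expR_gt0 ?expRK //; exact: Z_gt0.
have eF : series (fun N => lam E mu N * Fcan E N) =
    fun n => series c n + mu * series (fun N => N%:R * lam E mu N) n
             - ln Zg * series (lam E mu) n.
  apply/funext; elim=> [|n IH]; first by rewrite /series /= !big_geq //; ring.
  rewrite !seriesSr IH /c /Fcan.
  have := lnlam n; move=> h.
  have -> : ln (Zcan E n) = ln (lam E mu n) - mu * n%:R + ln Zg by rewrite h; ring.
  ring.
have cF : series (fun N => lam E mu N * Fcan E N) @ \oo --> C + mu * Nbar%:R - ln Zg * 1.
  rewrite eF.
  apply: (@cvgB _ _ _ _ _ (fun n => series c n + mu * series (fun N => N%:R * lam E mu N) n)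
    (fun n => ln Zg * series (lam E mu) n)).
    apply: (@cvgD _ _ _ _ _ (series c) (fun n => mu * series (fun N => N%:R * lam E mu N) n)).
      exact: cc.
    exact: (@cvgM _ _ _ _ (fun=> mu) _ _ _ (cvg_cst _) cM).
  exact: (@cvgM _ _ _ _ (fun=> ln Zg) _ _ _ (cvg_cst _) cP).
have eS : series (fun N => lam E mu N * ln (lam E mu N)) = fun n => - series c n.
  apply/funext => n; rewrite /series /= -sumrN; apply: eq_bigr => k _.
  by rewrite /c mulNr opprK.
have cS : series (fun N => lam E mu N * ln (lam E mu N)) @ \oo --> - C.
  by rewrite eS; apply: (@cvgN _ _ _ _ _ (series c)); exact: cc.
have eFgc : Fgc E mu = mu * Nbar%:R - ln Zg.
  rewrite /Fgc /entropy /rsum (limE cF) (limE cS); ring.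
have eFc : Fcan E Nbar = - ln (lam E mu Nbar) + mu * Nbar%:R - ln Zg.
  by rewrite /Fcan lnlam; ring.
rewrite eFgc eFc; split; lra.
Qed.
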